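(* Let $\nu_{AB}$ be a density operator on $\mathbb{C}^2\otimes\mathbb{C}^{d}$ whose marginal $\nu_A=\operatorname{tr}_B\nu_{AB}$ has spectrum $\{\frac{1-\eta}{2},\frac{1+\eta}{2}\}$ for some $\eta\in[0,1)$, and let $\mu_{AB}:=(\nu_A^{-1/2}\otimes\mathbb{1})\nu_{AB}(\nu_A^{-1/2}\otimes\mathbb{1})$. Then $$\mu_{AB}\ge s(\eta)\,\nu_{AB}-t(\eta)\,\frac{\mathbb{1}}{2}\otimes\nu_B,$$ where $\nu_B=\operatorname{tr}_A\nu_{AB}$, $s(\eta):=\frac{2}{\sqrt{1-\eta^2}}$ and $t(\eta):=\frac{4}{\sqrt{1-\eta^2}}-\frac{4}{1+\eta}$.
   Context: The inequality is in the positive semidefinite (Loewner) order. *)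

(* Defs.v *)
(* Matrices over an arbitrary numeric closed field C
   (a model of the complex numbers, with conjugation ^* and sqrtC). *)
From HB Require Import structures.
From mathcomp Require Import all_boot all_order all_algebra.
Set Implicit Arguments. Unset Strict Implicit. Unset Printing Implicit Defensive.
Import Order.TTheory GRing.Theory Num.Theory.
Local Open Scope ring_scope.

Section QDefs.
Variable C : numClosedFieldType.

Definition adjmx m n (A : 'M[C]_(m, n)) : 'M[C]_(n, m) := map_mx Num.conj A^T.

Definition psdmx n (A : 'M[C]_n) : Prop :=
  A = adjmx A /\ forall v : 'cV[C]_n, 0 <= (adjmx v *m A *m v) 0 0.

Definition lemx n (A B : 'M[C]_n) : Prop := psdmx (B - A).

Definition density n (A : 'M[C]_n) : Prop := psdmx A /\ \tr A = 1.

(* C^m (x) C^n is identified with C^(m*n) via mxvec_index : 'I_m -> 'I_n -> 'I_(m*n) *)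
Definition idx1 m n (i : 'I_(m * n)) : 'I_m :=
  (enum_val (cast_ord (esym (mxvec_cast m n)) i)).1.
Definition idx2 m n (i : 'I_(m * n)) : 'I_n :=
  (enum_val (cast_ord (esym (mxvec_cast m n)) i)).2.

Definition tensmx m n (A : 'M[C]_m) (B : 'M[C]_n) : 'M[C]_(m * n) :=
  \matrix_(i, j) (A (idx1 i) (idx1 j) * B (idx2 i) (idx2 j)).

Definition ptrB m n (M : 'M[C]_(m * n)) : 'M[C]_m :=
  \matrix_(a, a') \sum_(b < n) M (mxvec_index a b) (mxvec_index a' b).
Definition ptrA m n (M : 'M[C]_(m * n)) : 'M[C]_n :=
  \matrix_(b, b') \sum_(a < m) M (mxvec_index a b) (mxvec_index a b').

Definition s_eta (eta : C) : C := 2 / sqrtC (1 - eta ^+ 2).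
Definition t_eta (eta : C) : C := 4 / sqrtC (1 - eta ^+ 2) - 4 / (1 + eta).

End QDefs.

(* Main.v *)
Require Import Defs.
From HB Require Import structures.
From mathcomp Require Import all_boot all_order all_algebra.
From mathcomp Require Import ring.
Import Order.TTheory GRing.Theory Num.Theory.
Local Open Scope ring_scope.

Section H.
Set Implicit Arguments.
Variable C : numClosedFieldType.

Lemma idx1E m n (a : 'I_m) (b : 'I_n) : idx1 (mxvec_index a b) = a.
Proof. by rewrite /idx1 /mxvec_index cast_ordK enum_rankK. Qed.
Lemma idx2E m n (a : 'I_m) (b : 'I_n) : idx2 (mxvec_index a b) = b.
Proof. by rewrite /idx2 /mxvec_index cast_ordK enum_rankK. Qed.

Lemma sum_idx m n (F : 'I_(m * n) -> C) :
  \sum_(k < m * n) F k = \sum_(a < m) \sum_(b < n) F (mxvec_index a b).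
Proof.
rewrite pair_bigA /= (reindex _ (@curry_mxvec_bij m n)) /=.
by apply: eq_bigr => -[a b].
Qed.

Lemma tensE m n (A : 'M[C]_m) (B : 'M[C]_n) a b a' b' :
  tensmx A B (mxvec_index a b) (mxvec_index a' b') = A a a' * B b b'.
Proof. by rewrite mxE !idx1E !idx2E. Qed.

Lemma mul_tens m n (A A' : 'M[C]_m) (B B' : 'M[C]_n) :
  tensmx A B *m tensmx A' B' = tensmx (A *m A') (B *m B').
Proof.
apply/matrixP => x y; case/mxvec_indexP: x => a b; case/mxvec_indexP: y => a' b'.
rewrite tensE !mxE sum_idx big_distrl /=; apply: eq_bigr => i _.
rewrite big_distrr /=; apply: eq_bigr => j _.
by rewrite !tensE mulrACA.
Qed.

Lemma mxvec_index_eq m n (a a' : 'I_m) (b b' : 'I_n) :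
  (mxvec_index a b == mxvec_index a' b') = (a == a') && (b == b').
Proof.
apply/idP/idP => [/eqP E|/andP[/eqP-> /eqP->]] //.
have := congr1 (@idx1 m n) E; have := congr1 (@idx2 m n) E.
by rewrite !idx1E !idx2E => -> ->; rewrite !eqxx.
Qed.

Lemma tens11 m n : tensmx (1%:M : 'M[C]_m) (1%:M : 'M[C]_n) = 1%:M.
Proof.
apply/matrixP => x y; case/mxvec_indexP: x => a b; case/mxvec_indexP: y => a' b'.
by rewrite tensE !mxE mxvec_index_eq; case: (a == a'); case: (b == b'); rewrite ?mulr1 ?mulr0.
Qed.

Lemma adjmx_tens m n (A : 'M[C]_m) (B : 'M[C]_n) :
  adjmx (tensmx A B) = tensmx (adjmx A) (adjmx B).
Proof.
apply/matrixP => x y; case/mxvec_indexP: x => a b; case/mxvec_indexP: y => a' b'.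
by rewrite tensE !mxE !idx1E !idx2E rmorphM.
Qed.

Lemma tens_entry m n (A B : 'M[C]_m) (N : 'M[C]_(m * n)) a b a' b' :
  (tensmx A 1%:M *m N *m tensmx B 1%:M) (mxvec_index a b) (mxvec_index a' b') =
  \sum_(i < m) \sum_(j < m) A a i * N (mxvec_index i b) (mxvec_index j b') * B j a'.
Proof.
rewrite mxE sum_idx.
under eq_bigr => j _.
  rewrite (bigD1 b') //= big1 => [|k kb]; last first.
    by rewrite tensE [1%:M _ _]mxE (negPf kb) mulr0n !mulr0.
  rewrite addr0 tensE [1%:M _ _]mxE eqxx mulr1n mulr1 mxE sum_idx big_distrl /=.
  under eq_bigr => i _.
    rewrite (bigD1 b) //= big1 => [|k kb]; last first.
      by rewrite tensE [1%:M _ _]mxE eq_sym (negPf kb) mulr0n !mulr0 mul0r.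
    rewrite addr0 tensE [1%:M _ _]mxE eqxx mulr1n mulr1.
  over.
over.
rewrite exchange_big /=; apply: eq_bigr => i _; apply: eq_bigr => j _.
by [].
Qed.

Lemma adjmxK m n (A : 'M[C]_(m, n)) : adjmx (adjmx A) = A.
Proof. by apply/matrixP => i j; rewrite !mxE conjCK. Qed.
Lemma adjmx_mul m n p (A : 'M[C]_(m, n)) (B : 'M[C]_(n, p)) :
  adjmx (A *m B) = adjmx B *m adjmx A.
Proof. by rewrite /adjmx trmx_mul map_mxM. Qed.
Lemma adjmxD m n (A B : 'M[C]_(m, n)) : adjmx (A + B) = adjmx A + adjmx B.
Proof. by apply/matrixP => i j; rewrite !mxE rmorphD. Qed.
Lemma adjmxB m n (A B : 'M[C]_(m, n)) : adjmx (A - B) = adjmx A - adjmx B.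
Proof. by apply/matrixP => i j; rewrite !mxE rmorphB. Qed.
Lemma adjmxZ m n a (A : 'M[C]_(m, n)) : adjmx (a *: A) = a^* *: adjmx A.
Proof. by apply/matrixP => i j; rewrite !mxE rmorphM. Qed.
Lemma adjmx1 n : adjmx (1%:M : 'M[C]_n) = 1%:M.
Proof. by rewrite /adjmx trmx1 map_mx1. Qed.
Lemma adjmx_delta m n (i : 'I_m) (j : 'I_n) :
  adjmx (delta_mx i j : 'M[C]_(m, n)) = delta_mx j i.
Proof.
apply/matrixP => x y; rewrite !mxE.
by case: (y == i); case: (x == j); rewrite /= ?rmorph1 ?rmorph0.
Qed.

Lemma psd_congr n m (A : 'M[C]_n) (K : 'M[C]_(n, m)) :
  psdmx A -> psdmx (adjmx K *m A *m K).
Proof.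
move=> [hA hQ]; split.
  by rewrite !adjmx_mul adjmxK -hA mulmxA.
move=> v; have := hQ (K *m v).
by rewrite adjmx_mul !mulmxA.
Qed.

Lemma psd_add n (A B : 'M[C]_n) : psdmx A -> psdmx B -> psdmx (A + B).
Proof.
move=> [hA qA] [hB qB]; split; first by rewrite adjmxD -hA -hB.
move=> v; rewrite mulmxDr mulmxDl mxE addr_ge0 //.
Qed.

Lemma psd_scale n a (A : 'M[C]_n) : 0 <= a -> psdmx A -> psdmx (a *: A).
Proof.
move=> ha [hA qA]; split; first by rewrite adjmxZ geC0_conj // -hA.
by move=> v; rewrite -scalemxAr -scalemxAl mxE mulr_ge0.
Qed.

Lemma psd_diag n (A : 'M[C]_n) i : psdmx A -> 0 <= A i i.
Proof.
move=> [_ qA]; have := qA (delta_mx i 0).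
have -> : adjmx (delta_mx i 0 : 'cV[C]_n) = delta_mx 0 i by rewrite adjmx_delta.
by rewrite -rowE -colE !mxE.
Qed.

Lemma ptrA_rot m n (A B : 'M[C]_m) (N : 'M[C]_(m * n)) :
  B *m A = 1%:M -> ptrA (tensmx A 1%:M *m N *m tensmx B 1%:M) = ptrA N.
Proof.
move=> hBA; apply/matrixP => b b'; rewrite !mxE.
under eq_bigr => a _ do rewrite tens_entry.
rewrite exchange_big /=; apply: eq_bigr => i _.
rewrite exchange_big /= (bigD1 i) //= [X in _ + X]big1 => [|j ji].
  rewrite addr0.
  have := congr1 (fun M : 'M[C]_m => M i i) hBA; rewrite !mxE eqxx mulr1n => h.
  rewrite -[RHS]mul1r -h mulr_suml; apply: eq_bigr => a _; ring.
have := congr1 (fun M : 'M[C]_m => M j i) hBA; rewrite !mxE (negPf ji) mulr0n.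
move=> h; rewrite -[RHS](mul0r (N (mxvec_index i b) (mxvec_index j b'))).
rewrite -[X in X * _]h mulr_suml.
apply: eq_bigr => a _; ring.
Qed.

Lemma sum2 (F : 'I_2 -> C) : \sum_(i < 2) F i = F ord0 + F ord_max.
Proof. by rewrite big_ord_recl big_ord1; congr (_ + F _); apply: val_inj. Qed.

Lemma entryD m n (A B : 'M[C]_(m, n)) i j : (A + B) i j = A i j + B i j.
Proof. by rewrite mxE. Qed.
Lemma entryN m n (A : 'M[C]_(m, n)) i j : (- A) i j = - A i j.
Proof. by rewrite mxE. Qed.
Lemma entryZ m n a (A : 'M[C]_(m, n)) i j : (a *: A) i j = a * A i j.
Proof. by rewrite mxE. Qed.

Lemma ord2 (i : 'I_2) : i = ord0 \/ i = ord_max.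
Proof. by case: i => [[|[|//]] Hi]; [left|right]; apply: val_inj. Qed.

Definition Lmx d (i j : 'I_2) : 'M[C]_(2 * d) := tensmx (delta_mx i j) 1%:M.

Lemma psdL d (N : 'M[C]_(2 * d)) i j : psdmx N -> psdmx (Lmx d j i *m N *m Lmx d i j).
Proof.
move=> hN; have := psd_congr (Lmx d i j) hN.
by rewrite /Lmx adjmx_tens adjmx_delta adjmx1.
Qed.

Lemma main_mx d (nu : 'M[C]_(2 * d)) (W P : 'M[C]_2) (c : 'rV[C]_2) (s t : C) :
 psdmx nu -> W *m P = 1%:M -> P *m W = 1%:M -> P = adjmx W ->
 c 0 ord0 * c 0 ord_max = s -> 0 <= t ->
 0 <= c 0 ord0 * c 0 ord0 - s + t / 2 -> 0 <= c 0 ord_max * c 0 ord_max - s + t / 2 ->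
 lemx (s *: nu - t *: tensmx (2^-1 *: 1%:M) (ptrA nu))
   (tensmx (W *m diag_mx c *m P) 1%:M *m nu *m tensmx (W *m diag_mx c *m P) 1%:M).
Proof.
move=> hnu hWP hPW hP hs ht h0 h1.
pose K : 'M[C]_(2 * d) := tensmx W 1%:M. pose K' : 'M[C]_(2 * d) := tensmx P 1%:M.
have hKK : K *m K' = 1%:M by rewrite mul_tens hWP mulmx1 tens11.
have hK'K : K' *m K = 1%:M by rewrite mul_tens hPW mulmx1 tens11.
have hK' : K' = adjmx K by rewrite /K /K' adjmx_tens adjmx1 -hP.
set nu' := K' *m nu *m K.
have hnu' : psdmx nu' by rewrite /nu' hK'; apply: psd_congr.
have enu : nu = K *m nu' *m K' by rewrite /nu' !mulmxA hKK mul1mx -mulmxA hKK mulmx1.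
have eX : tensmx (W *m diag_mx c *m P) 1%:M = K *m tensmx (diag_mx c) 1%:M *m K'.
  by rewrite !mul_tens !mulmx1.
have eT : ptrA nu = ptrA nu' by rewrite /nu' ptrA_rot.
set D' : 'M[C]_(2 * d) := tensmx (diag_mx c) 1%:M.
set T' := tensmx (2^-1 *: 1%:M : 'M[C]_2) (ptrA nu').
have eT' : tensmx (2^-1 *: 1%:M) (ptrA nu) = K *m T' *m K'.
  by rewrite eT !mul_tens mul1mx mulmx1 -scalemxAr mulmx1 -scalemxAl hWP.
have cancel_l : forall m (Y : 'M[C]_(m, 2 * d)), Y *m K' *m K = Y.
  by move=> m Y; rewrite -mulmxA hK'K mulmx1.
rewrite /lemx eX eT' [in s *: nu]enu [in _ *m nu *m _]enu.
have -> : K *m D' *m K' *m (K *m nu' *m K') *m (K *m D' *m K') -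
   (s *: (K *m nu' *m K') - t *: (K *m T' *m K')) =
   K *m (D' *m nu' *m D' - (s *: nu' - t *: T')) *m K'.
  by rewrite !mulmxBr !mulmxBl -!scalemxAr -!scalemxAl !mulmxA !cancel_l.
rewrite -[X in X *m _ *m K'](adjmxK K) -hK'; apply: psd_congr.
set a0 := c 0 ord0 * c 0 ord0 - s + t / 2.
set a1 := c 0 ord_max * c 0 ord_max - s + t / 2.
have -> : D' *m nu' *m D' - (s *: nu' - t *: T') =
  a0 *: (Lmx d ord0 ord0 *m nu' *m Lmx d ord0 ord0) +
  a1 *: (Lmx d ord_max ord_max *m nu' *m Lmx d ord_max ord_max) +
  (t / 2) *: (Lmx d ord0 ord_max *m nu' *m Lmx d ord_max ord0) +
  (t / 2) *: (Lmx d ord_max ord0 *m nu' *m Lmx d ord0 ord_max).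
  apply/matrixP => x y; case/mxvec_indexP: x => a b; case/mxvec_indexP: y => a' b'.
  clearbody nu'.
  rewrite !(entryD, entryN, entryZ) /Lmx !tens_entry /T' tensE.
  rewrite !mxE !sum2 /a0 /a1 -hs.
  have e01 : (ord0 == ord_max :> 'I_2) = false by [].
  have e10 : (ord_max == ord0 :> 'I_2) = false by [].
  case: (ord2 a) => ->; case: (ord2 a') => ->;
    rewrite !mxE ?eqxx ?e01 ?e10 /= ?mulr1n ?mulr0n; ring.
apply: psd_add; last by apply: psd_scale; [rewrite divr_ge0 | apply: psdL].
apply: psd_add; last by apply: psd_scale; [rewrite divr_ge0 | apply: psdL].
by apply: psd_add; apply: psd_scale => //; apply: psdL.
Qed.

Lemma scal (eta z0 z1 c0 c1 : C) :
 0 <= eta -> eta < 1 -> 0 <= c0 -> 0 <= c1 ->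
 z0 = (c0 * c0)^-1 -> z1 = (c1 * c1)^-1 ->
 (z0 == (1 - eta) / 2) || (z0 == (1 + eta) / 2) ->
 (z1 == (1 - eta) / 2) || (z1 == (1 + eta) / 2) ->
 ((1 - eta) / 2 == z0) || ((1 - eta) / 2 == z1) ->
 ((1 + eta) / 2 == z0) || ((1 + eta) / 2 == z1) ->
 [/\ c0 * c1 = s_eta eta, 0 <= t_eta eta,
     0 <= c0 * c0 - s_eta eta + t_eta eta / 2 &
     0 <= c1 * c1 - s_eta eta + t_eta eta / 2].
Proof.
move=> he0 he1 hc0 hc1 hz0 hz1 hz0e hz1e hl0 hl1.
have h1e : 0 < 1 + eta by apply: lt_le_trans ltr01 _; rewrite lerDl.
have h1e' : 0 < 1 - eta by rewrite subr_gt0.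
have h1e0 : 1 + eta != 0 by rewrite gt_eqF.
have h1e0' : 1 - eta != 0 by rewrite gt_eqF.
have hsq : 0 < 1 - eta ^+ 2 by rewrite subr_gt0 exprn_ilt1.
have hsq0 : 1 - eta ^+ 2 != 0 by rewrite gt_eqF.
set q := sqrtC (1 - eta ^+ 2).
have hq2 : q ^+ 2 = 1 - eta ^+ 2 by rewrite sqrtCK.
have hq0 : q != 0 by apply: contraNneq hsq0 => hq; rewrite -hq2 hq expr0n.
have hqge : 0 <= q by rewrite sqrtC_ge0 ltW.
have hq1 : q <= 1 + eta.
  have hA : 1 - eta ^+ 2 \in Num.nneg by rewrite qualifE /= ltW.
  have hB : (1 + eta) ^+ 2 \in Num.nneg by rewrite qualifE /= exprn_ge0 // ltW.
  rewrite /q -(sqrCK (ltW h1e)) ler_sqrtC //.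
  rewrite -subr_ge0 (_ : _ - _ = 2 * eta * (1 + eta)); last by ring.
  by apply: mulr_ge0; [apply: mulr_ge0 | exact: ltW].
have hs : s_eta eta = 2 / q by [].
have ht : t_eta eta = 4 * (1 + eta - q) / (q * (1 + eta)).
  by rewrite /t_eta -/q; field; rewrite h1e0 hq0.
have hcz0 : c0 * c0 = z0^-1 by rewrite hz0 invrK.
have hcz1 : c1 * c1 = z1^-1 by rewrite hz1 invrK.
have ha : forall z, (z == (1 - eta) / 2) || (z == (1 + eta) / 2) ->
    0 <= z^-1 - s_eta eta + t_eta eta / 2.
  move=> z /orP[] /eqP ->; rewrite hs ht.
    rewrite (_ : ((1 - eta) / 2)^-1 - 2 / q + 4 * (1 + eta - q) / (q * (1 + eta)) / 2
       = 4 * eta / ((1 - eta) * (1 + eta))).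
      by apply: divr_ge0; apply: mulr_ge0 => //; apply: ltW.
    by field; rewrite h1e0 h1e0' hq0.
  rewrite (_ : ((1 + eta) / 2)^-1 - 2 / q + 4 * (1 + eta - q) / (q * (1 + eta)) / 2 = 0) //.
  by field; rewrite h1e0 hq0.
split.
- apply/eqP; rewrite -(eqrXn2 (n := 2)) //; first last.
  + by rewrite hs divr_ge0.
  + exact: mulr_ge0.
  rewrite exprMn !expr2 hcz0 hcz1 hs.
  have hzz : z0 * z1 = (1 - eta) / 2 * ((1 + eta) / 2).
    move: hz0e hz1e hl0 hl1.
    by case/orP => /eqP ->; case/orP => /eqP ->; rewrite ?eqxx /= ?orbb => /eqP h1 /eqP h2;
      rewrite ?h1 ?h2 // ?[in RHS]h1 ?[in RHS]h2 // mulrC.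
  rewrite -invfM hzz (_ : 2 / q * (2 / q) = 4 / q ^+ 2); last by field.
  rewrite hq2; apply/eqP; field.
  by rewrite h1e0 h1e0' hsq0.
- rewrite ht; apply: divr_ge0; apply: mulr_ge0 => //; last exact: ltW.
  by rewrite subr_ge0.
- by rewrite hcz0 ha.
- by rewrite hcz1 ha.
Qed.

End H.

Theorem mainTheorem8 (C : numClosedFieldType) (d : nat)
  (nu : 'M[C]_(2 * d)) (eta : C) (X : 'M[C]_2) :
  density nu ->
  0 <= eta -> eta < 1 ->
  (forall a : C, eigenvalue (ptrB nu) a = (a == (1 - eta) / 2) || (a == (1 + eta) / 2)) ->
  (* X = nu_A^{-1/2}: the PSD square root of the inverse of nu_A *)
  psdmx X -> X *m X = invmx (ptrB nu) ->
  lemx (s_eta eta *: nu - t_eta eta *: tensmx (2^-1 *: 1%:M) (ptrA nu))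
       (tensmx X 1%:M *m nu *m tensmx X 1%:M).
Proof.
move=> [hnu htr] he0 he1 heig hX hXX.
have hXt : (X ^t*)%sesqui = X by rewrite [in RHS](proj1 hX).
have hXn : X \is normalmx by apply/normalmxP; rewrite hXt.
move/orthomx_spectralP: hXn => eX0.
have hPu : spectralmx X \is unitarymx := spectral_unitarymx X.
move: eX0 hPu; set P := spectralmx X; set c := spectral_diag X => eX0 hPu.
pose W := adjmx P.
have hPW : P *m W = 1%:M by exact: (unitarymxP hPu).
have hWP : W *m P = 1%:M.
  by have := trmxC_unitary P; rewrite hPu => /unitarymxP; rewrite trmxCK.
have hPadj : P = adjmx W by rewrite /W adjmxK.
have eX : X = W *m diag_mx c *m P by rewrite {1}eX0 invmx_unitary.
have hD : psdmx (diag_mx c).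
  have := psd_congr W hX; rewrite -hPadj {1}eX.
  by rewrite !mulmxA hPW mul1mx -mulmxA hPW mulmx1.
have hc : forall j, 0 <= c 0 j.
  by move=> j; have := psd_diag j hD; rewrite mxE eqxx mulr1n.
set N := ptrB nu.
have h1e : 0 < 1 + eta by apply: lt_le_trans ltr01 _; rewrite lerDl.
have h1e' : 0 < 1 - eta by rewrite subr_gt0.
have hl0 : (1 - eta) / 2 != 0 by rewrite mulf_neq0 ?invr_eq0 ?gt_eqF.
have hl1 : (1 + eta) / 2 != 0 by rewrite mulf_neq0 ?invr_eq0 ?gt_eqF.
have hNu : N \in unitmx.
  rewrite unitmxE unitfE; apply/negP => /det0P [v vn0 hv].
  have : eigenvalue N 0 by apply/eigenvalueP; exists v => //; rewrite hv scale0r.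
  by rewrite heig !(eq_sym 0) (negPf hl0) (negPf hl1).
have hXX' : X *m X = W *m (diag_mx c *m diag_mx c) *m P.
  by rewrite eX !mulmxA -(mulmxA _ P W) hPW mulmx1.
have hY : P *m N *m W *m (diag_mx c *m diag_mx c) = 1%:M.
  have h1 : N *m (W *m (diag_mx c *m diag_mx c) *m P) = 1%:M by rewrite -hXX' hXX mulmxV.
  have := congr1 (fun M : 'M[C]_2 => P *m M *m W) h1; rewrite mulmx1 hPW => <-.
  by rewrite !mulmxA -(mulmxA _ P W) hPW mulmx1.
move: hY; set Y := P *m N *m W => hY.
have hYe : forall i j, Y i j * (c 0 j * c 0 j) = (i == j)%:R.
  move=> i j; have := congr1 (fun M : 'M[C]_2 => M i j) hY.
  by rewrite /= mulmxA !mul_mx_diag !mxE mulrA => ->.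
have hcn : forall j, c 0 j * c 0 j != 0.
  move=> j; apply/negP => /eqP h0; have := hYe j j; rewrite h0 mulr0 eqxx => /eqP.
  by rewrite eq_sym oner_eq0.
pose z : 'rV[C]_2 := \row_j (c 0 j * c 0 j)^-1.
have hYd : Y = diag_mx z.
  apply/matrixP => i j; rewrite [RHS]mxE [z _ _]mxE; case: (eqVneq i j) => [->|ne].
    by rewrite mulr1n; apply: (mulIf (hcn j)); rewrite hYe eqxx mulVf.
  by rewrite mulr0n; apply: (mulIf (hcn j)); rewrite hYe (negPf ne) mul0r.
have hPN : P *m N = Y *m P by rewrite /Y -mulmxA hWP mulmx1.
have hfw : forall j, (z 0 j == (1 - eta) / 2) || (z 0 j == (1 + eta) / 2).
  move=> j; rewrite -heig; apply/eigenvalueP; exists (delta_mx 0 j *m P).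
    by rewrite -mulmxA hPN hYd mulmxA -[_ *m diag_mx z]rowE row_diag_mx -scalemxAl.
  apply/negP => /eqP h0; have := congr1 (fun M : 'rV[C]_2 => M *m W) h0.
  rewrite -mulmxA hPW mulmx1 mul0mx => /matrixP /(_ 0 j); rewrite !mxE !eqxx /= => /eqP.
  by rewrite oner_eq0.
have hbw : forall l, eigenvalue N l -> exists j, z 0 j = l.
  move=> l /eigenvalueP [v hv vn0].
  pose u := v *m W.
  have hu : u *m diag_mx z = l *: u.
    by rewrite -hYd /u /Y !mulmxA -(mulmxA v W P) hWP mulmx1 hv -scalemxAl.
  have un0 : u != 0.
    apply/negP => /eqP h; case/negP: vn0.
    have -> : v = u *m P by rewrite /u -mulmxA hWP mulmx1.
    by rewrite h mul0mx.
  have [j hj] : exists j, u 0 j != 0.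
    clearbody u; case: (eqVneq (u 0 ord0) 0) => h0; last by exists ord0.
    case: (eqVneq (u 0 ord_max) 0) => h1; last by exists ord_max.
    case/negP: un0; apply/eqP/rowP => k; rewrite [RHS]mxE; by case: (ord2 k) => ->.
  exists j; apply: (mulIf hj); have := congr1 (fun M : 'rV[C]_2 => M 0 j) hu.
  by rewrite mul_mx_diag !mxE mulrC => ->.
have hl0' : ((1 - eta) / 2 == z 0 ord0) || ((1 - eta) / 2 == z 0 ord_max).
  have [j hj] : exists j, z 0 j = (1 - eta) / 2 by apply: hbw; rewrite heig eqxx.
  by case: (ord2 j) hj => -> ->; rewrite eqxx ?orbT.
have hl1' : ((1 + eta) / 2 == z 0 ord0) || ((1 + eta) / 2 == z 0 ord_max).
  have [j hj] : exists j, z 0 j = (1 + eta) / 2 by apply: hbw; rewrite heig eqxx orbT.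
  by case: (ord2 j) hj => -> ->; rewrite eqxx ?orbT.
have hz0 : z 0 ord0 = (c 0 ord0 * c 0 ord0)^-1 by rewrite mxE.
have hz1 : z 0 ord_max = (c 0 ord_max * c 0 ord_max)^-1 by rewrite mxE.
have [hs ht ha0 ha1] := @scal C eta (z 0 ord0) (z 0 ord_max) (c 0 ord0) (c 0 ord_max)
  he0 he1 (hc _) (hc _) hz0 hz1 (hfw _) (hfw _) hl0' hl1'.
rewrite eX; exact: main_mx.
Qed.
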